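(* Let $\Lambda=\{\Lambda_\omega\in B(\mathcal H,\mathcal K_\omega):\omega\in\Omega\}$ and $\Theta=\{\Theta_\omega\in B(\mathcal H,\mathcal K_\omega):\omega\in\Omega\}$ be two disjoint continuous $g$-frames for $\mathcal H$. Then $\{\Lambda_\omega+\Theta_\omega\in B(\mathcal H,\mathcal K_\omega):\omega\in\Omega\}$ is a continuous $g$-frame for $\mathcal H$.
   Context: $\mathcal H$ is a complex Hilbert space, $(\Omega,\mu)$ a measure space with positive measure $\mu$, and $\{\mathcal K_\omega:\omega\in\Omega\}$ a family of complex Hilbert spaces. A map $F$ on $\Omega$ with $F(\omega)\in\mathcal K_\omega$ is strongly measurable if it is measurable as a map $\Omega\to\bigoplus_\omega\mathcal K_\omega$; $\widehat{\mathcal K}$ is the Hilbert space of strongly measurable such $F$ with $\int_\Omega\|F(\omega)\|^2d\mu<\infty$, inner product $\langle F,G\rangle=\int_\Omega\langle F(\omega),G(\omega)\rangle d\mu$. A family $\Lambda=\{\Lambda_\omega\in B(\mathcal H,\mathcal K_\omega)\}$ is a continuous $g$-frame for $\mathcal H$ if $\omega\mapsto\Lambda_\omega f$ is strongly measurable for each $f$ and there are $0<A\le B<\infty$ with $A\|f\|^2\le\int_\Omega\|\Lambda_\omega f\|^2d\mu(\omega)\le B\|f\|^2$ for all $f\in\mathcal H$. Its analysis operator $T_\Lambda^*:\mathcal H\to\widehat{\mathcal K}$ is $(T_\Lambda^*f)(\omega)=\Lambda_\omega f$. Two continuous $g$-frames $\Lambda,\Theta$ are disjoint if $\mathrm{Range}\,T_\Lambda^*\cap\mathrm{Range}\,T_\Theta^*=\{0\}$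 and $\mathrm{Range}\,T_\Lambda^*+\mathrm{Range}\,T_\Theta^*$ is a closed subspace of $\widehat{\mathcal K}$. *)

(* Defs.v *)
From HB Require Import structures.
From mathcomp Require Import all_boot all_order all_algebra complex.
From mathcomp Require Import all_classical all_reals all_analysis.
Import Order.TTheory GRing.Theory Num.Theory.

Set Implicit Arguments.
Unset Strict Implicit.
Unset Printing Implicit Defensive.

Local Open Scope classical_set_scope.
Local Open Scope ring_scope.

HB.mixin Record Lmodule_isComplexInner (R : realType) V
    of GRing.Lmodule R[i] V := {
  cinner : V -> V -> R[i];
  cinnerDl : forall (a : R[i]) (x y z : V),
      cinner (a *: x + y) z = a * cinner x z + cinner y z;
  cinnerC : forall x y : V, cinner x y = (cinner y x)^*;
  cinner_ge0 : forall x : V, 0 <= cinner x x;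
  cinner_eq0 : forall x : V, cinner x x = 0 -> x = 0
}.

#[short(type="preHilbertType")]
HB.structure Definition PreHilbert (R : realType) :=
  {V of Lmodule_isComplexInner R V & GRing.Lmodule R[i] V}.

Definition hnorm (R : realType) (V : preHilbertType R) (x : V) : R :=
  Num.sqrt (complex.Re (cinner x x)).

Definition hcauchy (R : realType) (V : preHilbertType R) (u : nat -> V) :=
  forall e : R, 0 < e -> exists N : nat, forall m n : nat,
    (N <= m)%N -> (N <= n)%N -> hnorm (u m - u n) < e.

Definition hconverges (R : realType) (V : preHilbertType R) (u : nat -> V)
    (l : V) :=
  forall e : R, 0 < e -> exists N : nat, forall n : nat,
    (N <= n)%N -> hnorm (u n - l) < e.

HB.mixin Record PreHilbert_isComplete (R : realType) V
    of PreHilbert R V := {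
  hcomplete : forall u : nat -> V, hcauchy u -> exists l : V, hconverges u l
}.

#[short(type="hilbertType")]
HB.structure Definition Hilbert (R : realType) :=
  {V of PreHilbert_isComplete R V & PreHilbert R V}.

Section Defs.
Variable R : realType.

Definition hopen (V : preHilbertType R) (U : set V) :=
  forall x, U x -> exists2 e : R, 0 < e & forall y, hnorm (y - x) < e -> U y.

Definition closed_subspace (V : preHilbertType R) (S : set V) :=
  S 0 /\ (forall (a : R[i]) x y, S x -> S y -> S (a *: x + y)) /\
  (forall (u : nat -> V) (l : V), (forall n, S (u n)) -> hconverges u l -> S l).

Definition bounded_linear (H K : preHilbertType R) (T : H -> K) :=
  (forall (a : R[i]) (x y : H), T (a *: x + y) = a *: T x + T y) /\
  exists c : R, forall x : H, hnorm (T x) <= c * hnorm x.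

Section Measure.
Context (d : measure_display) (Om : measurableType d)
        (mu : {measure set Om -> \bar R}).
Context (K : hilbertType R).

(* Borel measurability of a map Om -> K (preimages of open sets are
   measurable).  K plays the role of the (internal) direct sum of the
   K_w. *)
Definition strongly_measurable (F : Om -> K) :=
  forall U : set K, hopen U -> measurable (F @^-1` U).

Definition sq_int (F : Om -> K) : \bar R :=
  (\int[mu]_w ((hnorm (F w)) ^+ 2)%:E)%E.

(* F is a (representative of an) element of hat K *)
Definition in_hatK (Ksub : Om -> set K) (F : Om -> K) :=
  strongly_measurable F /\ (forall w, Ksub w (F w)) /\ (sq_int F < +oo)%E.

Context (H : hilbertType R).

Definition cont_gframe (Ksub : Om -> set K) (L : Om -> H -> K) :=
  (forall w, bounded_linear (L w) /\ (forall f, Ksub w (L w f))) /\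
  (forall f : H, strongly_measurable (fun w => L w f)) /\
  exists A B : R, 0 < A /\ A <= B /\
    forall f : H,
      ((A * hnorm f ^+ 2)%:E <= sq_int (fun w => L w f))%E /\
      (sq_int (fun w => L w f) <= (B * hnorm f ^+ 2)%:E)%E.

(* disjointness of two continuous g-frames: the ranges of the analysis
   operators (in hat K, elements identified mu-a.e.) intersect trivially
   and their sum is (sequentially) closed in hat K. *)
Definition gframes_disjoint (Ksub : Om -> set K) (L T : Om -> H -> K) :=
  (forall f g : H, {ae mu, forall w, L w f = T w g} ->
     {ae mu, forall w, L w f = 0}) /\
  (forall (fs gs : nat -> H) (F : Om -> K), in_hatK Ksub F ->
     (fun n => sq_int (fun w => L w (fs n) + T w (gs n) - F w)) @ \oo --> 0%E ->
     exists f g : H, {ae mu, forall w, F w = L w f + T w g}).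

End Measure.
End Defs.

(* Main.v *)
Require Import Defs.
From HB Require Import structures.
From mathcomp Require Import all_boot all_order all_algebra complex.
From mathcomp Require Import all_classical all_reals all_analysis.
From mathcomp Require Import ring lra.
From mathcomp Require Import measurable_realfun.
Import Order.TTheory GRing.Theory Num.Theory.
Local Open Scope classical_set_scope.
Local Open Scope ring_scope.
Set Implicit Arguments.
Unset Strict Implicit.
Unset Printing Implicit Defensive.

Notation nrm := hnorm (only parsing).

Section Inner.
Variable R : realType.
Variable V : preHilbertType R.
Implicit Types x y z : V.

Definition ip (x y : V) : R := complex.Re (cinner x y).

Lemma Re_conj (z : R[i]) : complex.Re (z^*) = complex.Re z.
Proof. by case: z. Qed.

Lemma ipC x y : ip x y = ip y x.
Proof. by rewrite /ip cinnerC Re_conj. Qed.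

Lemma ipDl x y z : ip (x + y) z = ip x z + ip y z.
Proof.
rewrite /ip; have := cinnerDl 1 x y z; rewrite scale1r mul1r => ->.
by case: (cinner x z); case: (cinner y z).
Qed.

Lemma ipZl (r : R) x z : ip ((r%:C)%C *: x) z = r * ip x z.
Proof.
rewrite /ip -[_ *: x]addr0 cinnerDl.
have -> : cinner (0 : V) z = 0.
  have h := cinnerDl 1 (0:V) 0 z. rewrite scale1r addr0 mul1r in h.
  by apply: (@addrI _ (cinner (0:V) z)); rewrite addr0 -h.
by rewrite addr0; case: (cinner x z) => a b /=; rewrite !mul0r subr0.
Qed.

Lemma ip0l z : ip 0 z = 0.
Proof. by have := ipZl 0 0 z; rewrite mul0r => <-; congr ip; rewrite scaler0. Qed.

Lemma ipNl x z : ip (- x) z = - ip x z.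
Proof.
apply/eqP; rewrite -subr_eq0 opprK -ipDl addNr; exact/eqP/ip0l.
Qed.

Lemma ipBl x y z : ip (x - y) z = ip x z - ip y z.
Proof. by rewrite ipDl ipNl. Qed.

Lemma ipDr x y z : ip z (x + y) = ip z x + ip z y.
Proof. by rewrite ipC ipDl ipC [ip y z]ipC. Qed.

Lemma ipBr x y z : ip z (x - y) = ip z x - ip z y.
Proof. by rewrite ipC ipBl ipC [ip y z]ipC. Qed.

Lemma ipZr (r : R) x z : ip z ((r%:C)%C *: x) = r * ip z x.
Proof. by rewrite ipC ipZl ipC. Qed.

Lemma ip_ge0 x : 0 <= ip x x.
Proof. by have := cinner_ge0 x; rewrite lecE => /andP[]. Qed.

Lemma ip_eq0 x : ip x x = 0 -> x = 0.
Proof.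
move=> h; apply: cinner_eq0.
have := cinner_ge0 x; rewrite lecE => /andP[/eqP him _].
move: h him; rewrite /ip; case: (cinner x x) => a b /= -> ->; done.
Qed.


Lemma nrmE x : nrm x = Num.sqrt (ip x x).
Proof. by []. Qed.

Lemma nrm_ge0 x : 0 <= nrm x.
Proof. exact: sqrtr_ge0. Qed.

Lemma nrm_sq x : nrm x ^+ 2 = ip x x.
Proof. by rewrite nrmE sqr_sqrtr // ip_ge0. Qed.

Lemma nrm_eq0 x : nrm x = 0 -> x = 0.
Proof. by move=> h; apply: ip_eq0; rewrite -nrm_sq h expr0n. Qed.

Lemma nrm0 : nrm (0 : V) = 0.
Proof. by rewrite nrmE ip0l sqrtr0. Qed.

Lemma nrmN x : nrm (- x) = nrm x.
Proof. by rewrite !nrmE ipNl ipC ipNl opprK. Qed.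

Lemma nrmZ (r : R) x : nrm ((r%:C)%C *: x) = `|r| * nrm x.
Proof.
by rewrite !nrmE ipZl ipZr mulrA sqrtrM ?sqrtr_sqr // -expr2 sqr_ge0.
Qed.

Lemma nrmB_sym x y : nrm (x - y) = nrm (y - x).
Proof. by rewrite -nrmN opprB. Qed.

Lemma young x y (t : R) : 0 < t ->
  ip (x + y) (x + y) <= (1 + t) * ip x x + (1 + t^-1) * ip y y.
Proof.
move=> t0.
have h := ip_ge0 ((t%:C)%C *: x - y).
rewrite ipBl !ipBr !ipZl !ipZr in h.
rewrite ipDl !ipDr [ip y x]ipC.
have h2 : 2 * ip x y <= t * ip x x + t^-1 * ip y y.
  rewrite -(@ler_pM2l _ t) //.
  have -> : t * (t * ip x x + t^-1 * ip y y) = t * (t * ip x x) + ip y y.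
    by rewrite mulrDr (mulrA t t^-1) mulfV ?gt_eqF // mul1r.
  rewrite [ip y x]ipC in h. lra.
lra.
Qed.

End Inner.

Lemma sqrt_tri (R : realType) (a b c : R) : 0 <= a -> 0 <= b -> 0 <= c ->
  (forall t, 0 < t -> c <= (1 + t) * a + (1 + t^-1) * b) ->
  Num.sqrt c <= Num.sqrt a + Num.sqrt b.
Proof.
move=> a0 b0 c0 h.
have key : c <= (Num.sqrt a + Num.sqrt b) ^+ 2.
  have [a00|apos] := eqVneq a 0.
    subst a. rewrite sqrtr0 add0r sqr_sqrtr //.
    apply/ler_addgt0Pr => e e0.
    have [b00|bpos] := eqVneq b 0.
      subst b. have := h 1 ltr01. lra.
    have bp : 0 < b by rewrite lt_def bpos b0.
    have := h (b / e) (divr_gt0 bp e0).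
    rewrite invf_div mulr0 add0r mulrDl mul1r.
    have -> : e / b * b = e by rewrite -mulrA mulVf ?gt_eqF // mulr1.
    lra.
  have ap : 0 < a by rewrite lt_def apos a0.
  have [b00|bpos] := eqVneq b 0.
    subst b. rewrite sqrtr0 addr0 sqr_sqrtr //.
    apply/ler_addgt0Pr => e e0.
    have := h (e / a) (divr_gt0 e0 ap).
    rewrite mulr0 addr0 mulrDl mul1r -mulrA mulVf ?gt_eqF // mulr1. lra.
  have bp : 0 < b by rewrite lt_def bpos b0.
  have sa : 0 < Num.sqrt a by rewrite sqrtr_gt0.
  have sb : 0 < Num.sqrt b by rewrite sqrtr_gt0.
  have := h (Num.sqrt b / Num.sqrt a) (divr_gt0 sb sa).
  move: sa sb; set A := Num.sqrt a; set B := Num.sqrt b => sa sb.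
  have ea : a = A ^+ 2 by rewrite sqr_sqrtr.
  have eb : b = B ^+ 2 by rewrite sqr_sqrtr.
  have -> : (1 + B / A) * a + (1 + (B / A)^-1) * b = (A + B) ^+ 2.
    by rewrite ea eb; field; rewrite !gt_eqF.
  done.
apply: (le_trans (y := Num.sqrt ((Num.sqrt a + Num.sqrt b)^+2))).
  by rewrite ler_sqrt // sqr_ge0.
by rewrite sqrtr_sqr ger0_norm // addr_ge0 // sqrtr_ge0.
Qed.

Section Inner2.
Variable R : realType.
Variable V : preHilbertType R.
Implicit Types x y z : V.

Lemma nrm_tri (x y : V) : nrm (x + y) <= nrm x + nrm y.
Proof.
rewrite !nrmE; apply: sqrt_tri; rewrite ?ip_ge0 //.
move=> t t0; exact: young.
Qed.

Lemma nrm_triB (x y z : V) : nrm (x - z) <= nrm (x - y) + nrm (y - z).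
Proof. by rewrite (le_trans _ (nrm_tri _ _)) // addrA subrK. Qed.

End Inner2.



Lemma archi_geo (R : realType) (c e : R) : 0 < e ->
  exists N : nat, forall n, (N <= n)%N -> c / 2 ^+ n < e.
Proof.
move=> e0.
exists (Num.trunc (c / e)).+1 => n Nn.
have p2 : 0 < (2:R) ^+ n by rewrite exprn_gt0.
rewrite ltr_pdivrMr // -ltr_pdivrMl // mulrC.
apply: (lt_le_trans (truncnS_gt _)).
apply: (le_trans (y := n%:R)); first by rewrite ler_nat.
rewrite -natrX ler_nat; apply: ltnW; exact: ltn_expl.
Qed.

Lemma le_of_eps (R : realType) (x y : R) :
  (forall e, 0 < e -> x <= y + e) -> x <= y.
Proof. by move=> h; apply/ler_addgt0Pr. Qed.

Section GeoLim.
Variable R : realType.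
Variable V : hilbertType R.

Lemma geo_lim (u : nat -> V) (c : R) :
  (forall k, nrm (u k.+1 - u k) <= c / 2 ^+ k) ->
  exists l, forall k, nrm (u k - l) <= 2 * c / 2 ^+ k.
Proof.
move=> hu.
have c0 : 0 <= c by have := hu 0%N; rewrite expr0 divr1; apply: le_trans; exact: nrm_ge0.
have step : forall k m, nrm (u (k + m)%N - u k) <= 2 * c / 2 ^+ k - 2 * c / 2 ^+ (k + m).
  move=> k; elim=> [|m IH]; first by rewrite addn0 subrr nrm0 subrr.
  apply: le_trans (nrm_triB _ (u (k + m)%N) _) _.
  rewrite addnS; apply: le_trans (lerD (hu _) IH) _.
  rewrite exprS.
  have p : 0 < (2:R) ^+ (k + m) by rewrite exprn_gt0.
  have -> : c / 2 ^+ (k + m) = 2 * c / (2 * 2 ^+ (k + m)) by field; rewrite gt_eqF.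
  have -> : 2 * c / 2 ^+ (k + m) = 2 * (2 * c / (2 * 2 ^+ (k + m))) by field; rewrite gt_eqF.
  lra.
have bnd : forall k n, (k <= n)%N -> nrm (u n - u k) <= 2 * c / 2 ^+ n.+1 * 0 + 2 * c / 2 ^+ k.
  move=> k n kn; rewrite mulr0 add0r -(subnKC kn).
  apply: le_trans (step k (n - k)%N) _.
  rewrite lerBlDr lerDl; apply: divr_ge0; [lra|exact: exprn_ge0].
have cau : hcauchy u.
  move=> e e0.
  have [N hN] := archi_geo (4 * c) (e0).
  exists N => m n Nm Nn.
  apply: le_lt_trans (nrm_triB _ (u N) _) _.
  rewrite [nrm (u N - u n)]nrmB_sym.
  have h1 := bnd _ _ Nm; have h2 := bnd _ _ Nn.
  rewrite mulr0 add0r in h1 h2.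
  have := hN N (leqnn N).
  have -> : 4 * c / 2 ^+ N = 2 * c / 2 ^+ N + 2 * c / 2 ^+ N by field; rewrite gt_eqF // exprn_gt0.
  lra.
have [l hl] := hcomplete u cau.
exists l => k.
apply: le_of_eps => e e0.
have [N hN] := hl e e0.
apply: le_trans (nrm_triB _ (u (maxn N k)) _) _.
have h1 := bnd k (maxn N k) (leq_maxr _ _).
rewrite mulr0 add0r nrmB_sym in h1.
have h2 := hN (maxn N k) (leq_maxl _ _).
lra.
Qed.

End GeoLim.



Section Meas.
Variable R : realType.
Variable K : hilbertType R.
Variables (d : measure_display) (Om : measurableType d).
Variable Ksub : Om -> set K.
Hypothesis horth : forall w w' : Om, w <> w' -> forall x y : K,
      Ksub w x -> Ksub w' y -> cinner x y = 0.

Lemma ball_open (c : K) (r : R) : hopen [set y | nrm (y - c) < r].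
Proof.
move=> x /= hx; exists (r - nrm (x - c)); first by rewrite subr_gt0.
move=> y hy; apply: le_lt_trans (nrm_triB _ x _) _; lra.
Qed.

Lemma nrm_gt0 (x : K) : x != 0 -> 0 < nrm x.
Proof.
move=> hx; rewrite lt_def nrm_ge0 andbT; apply/eqP => h.
by move/eqP: hx; apply; apply: nrm_eq0.
Qed.

Lemma nz_open : hopen [set y : K | y != 0].
Proof.
move=> x /= hx; exists (nrm x); first exact: nrm_gt0.
move=> y hy; apply/eqP => y0; move: hy; rewrite y0 sub0r nrmN; lra.
Qed.

Definition okf (G : Om -> K) := strongly_measurable G /\ forall w, Ksub w (G w).

Lemma pyth w w' (x y : K) : w <> w' -> Ksub w x -> Ksub w' y ->
  ip (x - y) (x - y) = ip x x + ip y y.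
Proof.
move=> ww kx ky.
have h : ip x y = 0 by rewrite /ip (horth ww kx ky).
have h' : ip y x = 0 by rewrite ipC.
rewrite ipBl !ipBr h h'; lra.
Qed.

Lemma any_sub_meas (G : Om -> K) : okf G ->
  forall A : set Om, A `<=` [set w | G w != 0] -> measurable A.
Proof.
move=> [mG kG] A hA.
pose U := [set y | exists2 w, A w & nrm (y - G w) < nrm (G w)].
have oU : hopen U.
  move=> y [w Aw hw].
  have [e e0 he] := ball_open hw.
  by exists e => // z /he hz; exists w.
have -> : A = G @^-1` U `&` G @^-1` [set y | y != 0].
  apply/seteqP; split => w.
    move=> Aw; have nz := hA _ Aw; split => //.
    by exists w => //; rewrite subrr nrm0; apply: nrm_gt0.
  move=> [[w' Aw' hw'] nz].
  case: (pselect (w = w')) => [->//|ne].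
  exfalso.
  have h := pyth ne (kG w) (kG w').
  have : ip (G w - G w') (G w - G w') < ip (G w') (G w').
    rewrite -!nrm_sq; have := nrm_ge0 (G w - G w'); nra.
  by rewrite h; have := ip_ge0 (G w); lra.
by apply: measurableI; [apply: mG | exact: (mG [set y | y != 0] nz_open)].
Qed.

Lemma fam_meas (Gs : nat -> Om -> K) : (forall n, okf (Gs n)) ->
  forall A : set Om,
  (forall w w', (forall n, Gs n w = 0) -> (forall n, Gs n w' = 0) -> A w -> A w') ->
  measurable A.
Proof.
move=> ok A hA.
pose Z := \bigcup_n [set w | Gs n w != 0].
have mZ : measurable Z.
  rewrite /Z; apply: (@bigcupT_measurable _ _ (fun n => [set w | Gs n w != 0])) => n.
  exact: (proj1 (ok n) [set y | y != 0] nz_open).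
have -> : A = (\bigcup_n (A `&` [set w | Gs n w != 0])) `|` (A `&` ~` Z).
  apply/seteqP; split => w.
    move=> Aw; case: (pselect (Z w)) => [[n _ hn]|nZ]; [left; exists n|right] => //.
  by case=> [[n _ []]|[]].
apply: measurableU.
  apply: bigcupT_measurable => n.
  by apply: (any_sub_meas (ok n)) => w [].
case: (pselect (exists w, A w /\ ~ Z w)) => [[w [Aw nZw]]|none].
  have -> : A `&` ~` Z = ~` Z.
    apply/seteqP; split => w'; first by case.
    move=> nZw'; split => //; apply: (hA w) => // n.
      by case: (eqVneq (Gs n w) 0) => // h; exfalso; apply: nZw; exists n.
    by case: (eqVneq (Gs n w') 0) => // h; exfalso; apply: nZw'; exists n.
  exact: measurableC.
have -> : A `&` ~` Z = set0.
  by apply/seteqP; split => w // [Aw nZ]; apply: none; exists w.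
exact: measurable0.
Qed.

Lemma fam_mfun (Gs : nat -> Om -> K) (phi : Om -> \bar R) : (forall n, okf (Gs n)) ->
  (forall w w', (forall n, Gs n w = 0) -> (forall n, Gs n w' = 0) -> phi w = phi w') ->
  measurable_fun setT phi.
Proof.
move=> ok hphi _ Y mY; rewrite setTI.
apply: (fam_meas ok) => w w' hw hw' /=.
by rewrite /preimage /= (hphi w w').
Qed.

Lemma fam_smeas (Gs : nat -> Om -> K) (F : Om -> K) : (forall n, okf (Gs n)) ->
  (forall w w', (forall n, Gs n w = 0) -> (forall n, Gs n w' = 0) -> F w = F w') ->
  strongly_measurable F.
Proof.
move=> ok hF U _.
apply: (fam_meas ok) => w w' hw hw' /=.
by rewrite /preimage /= (hF w w').
Qed.

End Meas.



Section Integ.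
Variable R : realType.
Variable K : hilbertType R.
Variables (d : measure_display) (Om : measurableType d).
Variable mu : {measure set Om -> \bar R}.
Variable Ksub : Om -> set K.
Hypothesis horth : forall w w' : Om, w <> w' -> forall x y : K,
      Ksub w x -> Ksub w' y -> cinner x y = 0.

Implicit Types G : Om -> K.

Definition det (Gs : nat -> Om -> K) (G : Om -> K) :=
  forall w, (forall n, Gs n w = 0) -> G w = 0.

Definition sqn (G : Om -> K) : Om -> \bar R := fun w => ((nrm (G w)) ^+ 2)%:E.

Lemma sq_intE G : sq_int mu G = (\int[mu]_w sqn G w)%E.
Proof. by []. Qed.

Lemma sqn_ge0 G w : (0 <= sqn G w)%E.
Proof. by rewrite lee_fin sqr_ge0. Qed.

Lemma sq_int_ge0 G : (0 <= sq_int mu G)%E.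
Proof. by apply: integral_ge0 => w _; exact: sqn_ge0. Qed.

Variable Gs : nat -> Om -> K.
Hypothesis ok : forall n, okf Ksub (Gs n).

Lemma sqn_mfun G : det Gs G -> measurable_fun setT (sqn G).
Proof.
move=> dG; apply: (fam_mfun horth ok) => w w' hw hw'.
by rewrite /sqn (dG w hw) (dG w' hw').
Qed.

Lemma sq_int_comb G G1 G2 (a b : R) : det Gs G -> det Gs G1 -> det Gs G2 ->
  0 <= a -> 0 <= b ->
  (forall w, nrm (G w) ^+ 2 <= a * nrm (G1 w) ^+ 2 + b * nrm (G2 w) ^+ 2) ->
  (sq_int mu G <= a%:E * sq_int mu G1 + b%:E * sq_int mu G2)%E.
Proof.
move=> dG dG1 dG2 a0 b0 h.
rewrite !sq_intE.
rewrite -(ge0_integralZl_EFin mu measurableT (fun w _ => sqn_ge0 G1 w) (sqn_mfun dG1) a0).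
rewrite -(ge0_integralZl_EFin mu measurableT (fun w _ => sqn_ge0 G2 w) (sqn_mfun dG2) b0).
rewrite -ge0_integralD //; last 4 first.
- by move=> w _; apply: mule_ge0; rewrite ?lee_fin // sqr_ge0.
- by apply: measurable_funeM; exact: sqn_mfun.
- by move=> w _; apply: mule_ge0; rewrite ?lee_fin // sqr_ge0.
- by apply: measurable_funeM; exact: sqn_mfun.
apply: ge0_le_integral => //.
- by move=> w _; exact: sqn_ge0.
- exact: sqn_mfun.
- by apply: emeasurable_funD; apply: measurable_funeM; exact: sqn_mfun.
- by move=> w _; rewrite /sqn -!EFinM -EFinD lee_fin.
Qed.

End Integ.



Lemma cN1 (R : realType) : ((-1 : R)%:C)%C = -1 :> R[i].
Proof. by apply/eqP; rewrite eq_complex /= oppr0 !eqxx. Qed.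

Section Lin.
Variable R : realType.
Variables (V W : preHilbertType R).
Variable F : V -> W.
Hypothesis hF : bounded_linear F.

Lemma linD x y : F (x + y) = F x + F y.
Proof. by have := (proj1 hF) 1 x y; rewrite !scale1r. Qed.

Lemma lin0 : F 0 = 0.
Proof.
have := linD 0 0; rewrite addr0 => h.
by apply: (@addrI _ (F 0)); rewrite addr0 -h.
Qed.

Lemma linZ (a : R[i]) x : F (a *: x) = a *: F x.
Proof. by have := (proj1 hF) a x 0; rewrite !addr0 lin0 addr0. Qed.

Lemma linN x : F (- x) = - F x.
Proof. by rewrite -scaleN1r linZ scaleN1r. Qed.

Lemma linB x y : F (x - y) = F x - F y.
Proof. by rewrite linD linN. Qed.
End Lin.

Section Sub.
Variable R : realType.
Variable V : preHilbertType R.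
Variable S : set V.
Hypothesis hS : closed_subspace S.

Lemma sub0 : S 0. Proof. exact: hS.1. Qed.
Lemma subD x y : S x -> S y -> S (x + y).
Proof. by move=> hx hy; have := hS.2.1 1 x y hx hy; rewrite scale1r. Qed.
Lemma subZ a x : S x -> S (a *: x).
Proof. by move=> hx; have := hS.2.1 a x 0 hx sub0; rewrite addr0. Qed.
Lemma subN x : S x -> S (- x).
Proof. by move=> hx; rewrite -scaleN1r; apply: subZ. Qed.
Lemma subB x y : S x -> S y -> S (x - y).
Proof. by move=> hx hy; apply: subD => //; apply: subN. Qed.
End Sub.


Lemma geo_es (R : realType) (r : R) : (\sum_(k <oo) (r / (2 ^ (k + 1))%:R)%:E = r%:E)%E.
Proof.
have := @cvg_geometric_eseries_half R r 0.
rewrite expr0 divr1 => /cvg_lim => <- //.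
Qed.

Lemma term_le_series (R : realType) (u : nat -> \bar R) k : (forall i, 0 <= u i)%E ->
  (u k <= \sum_(i <oo) u i)%E.
Proof.
move=> u0.
apply: le_trans (nneseries_lim_ge k.+1 (fun i _ _ => u0 i)).
rewrite big_nat_recr //= leeDr //; exact: sume_ge0.
Qed.

Lemma zm0 (V : zmodType) (z x y : V) : (z + x) - (z + y) = x - y.
Proof. by rewrite opprD addrACA subrr add0r. Qed.

Lemma zm1 (V : zmodType) (a b c e : V) : b - (c - e) = (a + b - c) - (a - e).
Proof. by rewrite -[a + b - c]addrA zm0 opprK opprB addrA addrAC. Qed.

Lemma zm2 (V : zmodType) (a b c : V) : (a - (b - c)) - (a - b) = c.
Proof. by rewrite zm0 opprK opprB subrK. Qed.

Unset Implicit Arguments.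
Section Main.
Variable R : realType.
Variables (H K : hilbertType R).
Variables (d : measure_display) (Om : measurableType d).
Variable mu : {measure set Om -> \bar R}.
Variable Ksub : Om -> set K.
Hypothesis hKsub : forall w, closed_subspace (Ksub w).
Hypothesis horth : forall w w' : Om, w <> w' -> forall x y : K,
      Ksub w x -> Ksub w' y -> cinner x y = 0.
Variables (L T : Om -> H -> K).
Hypothesis hL : cont_gframe mu Ksub L.
Hypothesis hT : cont_gframe mu Ksub T.
Hypothesis hdisj : gframes_disjoint mu Ksub L T.

Let Llin w : bounded_linear (L w). Proof. exact: (proj1 (proj1 hL w)). Qed.
Let Tlin w : bounded_linear (T w). Proof. exact: (proj1 (proj1 hT w)). Qed.
Let LK w f : Ksub w (L w f). Proof. exact: (proj2 (proj1 hL w)). Qed.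
Let TK w f : Ksub w (T w f). Proof. exact: (proj2 (proj1 hT w)). Qed.

Lemma okL f : okf Ksub (fun w => L w f).
Proof. by split; [exact: (proj1 (proj2 hL))|]. Qed.
Lemma okT f : okf Ksub (fun w => T w f).
Proof. by split; [exact: (proj1 (proj2 hT))|]. Qed.

Definition X := (H * H)%type.
Implicit Types x y z : X.

Definition S x : Om -> K := fun w => L w x.1 + T w x.2.

Definition LT x : nat -> Om -> K :=
  fun n => if n is 0%N then (fun w => L w x.1) else (fun w => T w x.2).

Lemma okLT x n : okf Ksub (LT x n).
Proof. by case: n => [|n]; [exact: okL|exact: okT]. Qed.

Lemma okS x : okf Ksub (S x).
Proof.
split; last by move=> w; apply: subD => //.
apply: (fam_smeas horth (okLT x)) => w w' hw hw'.
by rewrite /S (hw 0%N : L w x.1 = 0) (hw 1%N : T w x.2 = 0) (hw' 0%N : L w' x.1 = 0) (hw' 1%N : T w' x.2 = 0).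
Qed.

Lemma SD x y w : S (x + y) w = S x w + S y w.
Proof. by rewrite /S /= (linD (Llin w)) (linD (Tlin w)) addrACA. Qed.

Lemma SN x w : S (- x) w = - S x w.
Proof. by rewrite /S /= (linN (Llin w)) (linN (Tlin w)) opprD. Qed.

Lemma SB x y w : S (x - y) w = S x w - S y w.
Proof. by rewrite SD SN. Qed.

Lemma SZ (a : R[i]) x w : S (a *: x) w = a *: S x w.
Proof. by rewrite /S /= (linZ (Llin w)) (linZ (Tlin w)) scalerDr. Qed.

Lemma S0 w : S 0 w = 0.
Proof. by rewrite /S /= (lin0 (Llin w)) (lin0 (Tlin w)) addr0. Qed.


Lemma detLT x : det (LT x) (S x).
Proof.
by move=> w hw; rewrite /S (hw 0%N : L w x.1 = 0) (hw 1%N : T w x.2 = 0) addr0.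
Qed.

Lemma nrm_sum2 (a b : K) : nrm (a + b) ^+ 2 <= 2 * nrm a ^+ 2 + 2 * nrm b ^+ 2.
Proof.
rewrite !nrm_sq; have := young a b ltr01; rewrite invr1.
have -> : (1 + 1 : R) = 2 by [].
done.
Qed.

Lemma Qbound : exists C, 0 <= C /\ forall x,
  (sq_int mu (S x) <= (C * (nrm x.1 ^+ 2 + nrm x.2 ^+ 2))%:E)%E.
Proof.
have [A1 [B1 [A10 [AB1 h1]]]] := proj2 (proj2 hL).
have [A2 [B2 [A20 [AB2 h2]]]] := proj2 (proj2 hT).
exists (2 * B1 + 2 * B2); split; first lra.
move=> x.
have := sq_int_comb mu horth (okLT x) (G := S x) (G1 := LT x 0) (G2 := LT x 1)
  (detLT x) (fun w hw => hw 0%N) (fun w hw => hw 1%N) (a := 2) (b := 2)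
  (ler0n _ 2) (ler0n _ 2) (fun w => nrm_sum2 _ _).
move=> /le_trans; apply.
have e1 := (h1 x.1).2; have e2 := (h2 x.2).2.
apply: le_trans (leeD (lee_wpmul2l _ e1) (lee_wpmul2l _ e2)) _; rewrite ?lee_fin //.
have := sqr_ge0 (nrm x.1); have := sqr_ge0 (nrm x.2).
nra.
Qed.

Lemma sqS_fin x : (sq_int mu (S x) \is a fin_num)%E.
Proof.
have [C [C0 hC]] := Qbound.
rewrite ge0_fin_numE ?sq_int_ge0 //.
exact: le_lt_trans (hC x) (ltry _).
Qed.

Definition Q x := fine (sq_int mu (S x)).

Lemma QE x : sq_int mu (S x) = (Q x)%:E.
Proof. by rewrite /Q fineK // sqS_fin. Qed.

Lemma Q_ge0 x : 0 <= Q x.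
Proof. by have := sq_int_ge0 mu (S x); rewrite QE lee_fin. Qed.

Lemma Q_le : exists C, 0 <= C /\ forall x, Q x <= C * (nrm x.1 + nrm x.2) ^+ 2.
Proof.
have [C [C0 hC]] := Qbound; exists C; split => // x.
have := hC x; rewrite QE lee_fin => /le_trans; apply.
apply: ler_wpM2l => //.
have := nrm_ge0 x.1; have := nrm_ge0 x.2; nra.
Qed.

Definition S2 x1 x2 : nat -> Om -> K := fun n => if n is 0%N then S x1 else S x2.

Lemma okS2 x1 x2 n : okf Ksub (S2 x1 x2 n).
Proof. by case: n => [|n]; exact: okS. Qed.

Lemma Q_comb x x1 x2 (a b : R) : 0 <= a -> 0 <= b ->
  (forall w, nrm (S x w) ^+ 2 <= a * nrm (S x1 w) ^+ 2 + b * nrm (S x2 w) ^+ 2) ->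
  (forall w, S x1 w = 0 -> S x2 w = 0 -> S x w = 0) ->
  Q x <= a * Q x1 + b * Q x2.
Proof.
move=> a0 b0 hp hd.
have := sq_int_comb mu horth (okS2 x1 x2) (G := S x) (G1 := S x1) (G2 := S x2)
  (fun w hw => hd w (hw 0%N) (hw 1%N)) (fun w hw => hw 0%N) (fun w hw => hw 1%N)
  a0 b0 hp.
by rewrite !QE -!EFinM -EFinD lee_fin.
Qed.

Lemma Q_young x y (t : R) : 0 < t ->
  Q (x + y) <= (1 + t) * Q x + (1 + t^-1) * Q y.
Proof.
move=> t0; apply: Q_comb.
- lra.
- have : 0 < t^-1 by rewrite invr_gt0. lra.
- by move=> w; rewrite SD !nrm_sq; apply: young.
- by move=> w h1 h2; rewrite SD h1 h2 addr0.
Qed.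

Lemma Q_scale (r : R) x : Q ((r%:C)%C *: x) <= r ^+ 2 * Q x.
Proof.
have := @Q_comb ((r%:C)%C *: x) x x (r ^+ 2) 0 (sqr_ge0 _) (lexx 0).
rewrite mul0r addr0; apply.
- by move=> w; rewrite mul0r addr0 SZ nrmZ exprMn real_normK // num_real.
- by move=> w h1 _; rewrite SZ h1 scaler0.
Qed.

Lemma Q_negle x : Q (- x) <= Q x.
Proof.
have := @Q_comb (- x) x x 1 0 ler01 (lexx 0).
rewrite mul0r addr0 mul1r; apply.
- by move=> w; rewrite mul0r addr0 mul1r SN nrmN.
- by move=> w h1 _; rewrite SN h1 oppr0.
Qed.

Lemma Q_neg x : Q (- x) = Q x.
Proof. by apply/eqP; rewrite eq_le Q_negle /= -{1}(opprK x) Q_negle. Qed.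

Definition N x := Num.sqrt (Q x).

Lemma N_ge0 x : 0 <= N x. Proof. exact: sqrtr_ge0. Qed.

Lemma N_tri x y : N (x + y) <= N x + N y.
Proof. by apply: sqrt_tri; rewrite ?Q_ge0 // => t t0; apply: Q_young. Qed.

Lemma N_sym x y : N (x - y) = N (y - x).
Proof. by rewrite /N -Q_neg opprB. Qed.

Lemma N_triB x y z : N (x - z) <= N (x - y) + N (y - z).
Proof. by rewrite (le_trans _ (N_tri _ _)) // addrA subrK. Qed.

Lemma N_sq x : N x ^+ 2 = Q x.
Proof. by rewrite /N sqr_sqrtr // Q_ge0. Qed.

Lemma le_sq (a b : R) : 0 <= a -> 0 <= b -> a ^+ 2 <= b ^+ 2 -> a <= b.
Proof. move=> a0 b0 h; nra. Qed.

Lemma N_scale (r : R) x : N ((r%:C)%C *: x) = `|r| * N x.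
Proof.
have h1 : N ((r%:C)%C *: x) <= `|r| * N x.
  apply: le_sq; rewrite ?N_ge0 ?mulr_ge0 ?N_ge0 //.
  by rewrite exprMn real_normK ?num_real // !N_sq Q_scale.
have [r00|r0] := eqVneq r 0.
  by apply/eqP; rewrite eq_le h1 r00 normr0 mul0r N_ge0.
apply/eqP; rewrite eq_le h1 /=.
have := Q_scale r^-1 ((r%:C)%C *: x).
rewrite scalerA.
have -> : ((r^-1)%:C * r%:C)%C = 1.
  by apply/eqP; rewrite eq_complex /= !mul0r !mulr0 subr0 addr0 mulVf // !eqxx.
rewrite scale1r => h.
apply: le_sq; rewrite ?N_ge0 ?mulr_ge0 ?N_ge0 //.
rewrite exprMn real_normK ?num_real // !N_sq.
rewrite exprVn in h.
have p : 0 < r ^+ 2 by rewrite lt_def sqrf_eq0 r0 sqr_ge0.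
rewrite -(@ler_pM2l _ (r ^+ 2)^-1) ?invr_gt0 //.
by rewrite mulrA mulVf ?gt_eqF // mul1r.
Qed.

Lemma frame_ae0 (F : Om -> H -> K) (hF : cont_gframe mu Ksub F) f :
  {ae mu, forall w, F w f = 0} -> f = 0.
Proof.
move=> hae.
have okF : okf Ksub (fun w => F w f).
  by split; [exact: (proj1 (proj2 hF))|move=> w; exact: (proj2 (proj1 hF w))].
pose Gs : nat -> Om -> K := fun _ w => F w f.
have mf : measurable_fun setT (sqn (fun w => F w f)).
  by apply: (sqn_mfun horth (Gs := Gs)) => // w hw; apply: (hw 0%N).
have h0 : sq_int mu (fun w => F w f) = 0%E.
  rewrite sq_intE (ae_eq_integral (cst 0%E) _ measurableT mf) ?integral0 //.
  apply: filterS hae => w hw _; by rewrite /sqn hw nrm0 expr0n.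
have [A [B [A0 [AB hAB]]]] := proj2 (proj2 hF).
have := (hAB f).1; rewrite h0 lee_fin => hle.
apply: nrm_eq0.
have : nrm f ^+ 2 <= 0 by rewrite -(@ler_pM2l _ A) // mulr0.
have := nrm_ge0 f; nra.
Qed.

Lemma Q_inj x : Q x = 0 -> x = 0.
Proof.
move=> hq.
have ms : measurable_fun setT (sqn (S x)).
  by apply: (sqn_mfun horth (okLT x)); exact: detLT.
have hae : {ae mu, forall w, S x w = 0}.
  have : (\int[mu]_w `|sqn (S x) w| = 0)%E.
    rewrite -[RHS](_ : (Q x)%:E = 0%E); last by rewrite hq.
    rewrite -QE sq_intE; apply: eq_integral => w _; rewrite gee0_abs //; exact: sqn_ge0.
  move/(ae_eq_integral_abs mu measurableT ms).
  apply: filterS => w /(_ I) /= /eqP; rewrite /sqn eqe sqrf_eq0 => /eqP h.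
  exact: nrm_eq0.
have e1 : x.1 = 0.
  apply: (frame_ae0 L hL).
  apply: (proj1 hdisj x.1 (- x.2)).
  apply: filterS hae => w; rewrite /S (linN (Tlin w)) => /eqP.
  by rewrite addr_eq0 => /eqP.
have e2 : x.2 = 0.
  apply: (frame_ae0 T hT).
  apply: filterS hae => w; by rewrite /S e1 (lin0 (Llin w)) add0r.
by case: x e1 e2 {hq ms hae} => a b /= -> ->.
Qed.


Section RF.
Variable y : nat -> X.
Variable c : R.
Hypothesis hy : forall k, N (y k.+1 - y k) <= c / (2 ^+ k) ^+ 2.

Let G k := S (y k).
Let Gs : nat -> Om -> K := fun n => S (y n).
Let okG n : okf Ksub (Gs n). Proof. exact: okS. Qed.

Let p k : R := 2 ^+ k.
Let p_gt0 k : 0 < p k. Proof. exact: exprn_gt0. Qed.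
Let p_ge1 k : 1 <= p k. Proof. by apply: exprn_ege1; rewrite ler1n. Qed.

Let c0 : 0 <= c.
Proof.
have := hy 0%N; rewrite expr0 expr1n divr1 => h.
exact: le_trans (N_ge0 _) h.
Qed.

Let Qd k : Q (y k.+1 - y k) <= (c / p k ^+ 2) ^+ 2.
Proof.
rewrite -N_sq.
have h2 : N (y k.+1 - y k) <= c / p k ^+ 2 := hy k.
have h1 := N_ge0 (y k.+1 - y k).
nra.
Qed.

Let detd k : det Gs (S (y k.+1 - y k)).
Proof. by move=> w hw; rewrite SB (hw k.+1 : S (y k.+1) w = 0) (hw k : S (y k) w = 0) subr0. Qed.

Let detG k : det Gs (G k).
Proof. by move=> w hw; exact: hw k. Qed.

Definition term k : Om -> \bar R := fun w => ((p k ^+ 2)%:E * sqn (S (y k.+1 - y k)%R) w)%E.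
Definition hh w := (\sum_(k <oo) term k w)%E.

Let term_ge0 k w : (0 <= term k w)%E.
Proof. by apply: mule_ge0; [rewrite lee_fin exprn_ge0 // ltW|exact: sqn_ge0]. Qed.

Let term_mfun k : measurable_fun setT (term k).
Proof. by apply: measurable_funeM; apply: (sqn_mfun horth okG); exact: detd. Qed.

Let hh0 w : (forall n, Gs n w = 0) -> hh w = 0%E.
Proof.
move=> hw; rewrite /hh eseries0 // => i _ _.
by rewrite /term /sqn (detd i w hw) nrm0 expr0n mule0.
Qed.

Let hh_ge0 w : (0 <= hh w)%E.
Proof. by apply: nneseries_ge0 => i _ _; exact: term_ge0. Qed.

Let hh_mfun : measurable_fun setT hh.
Proof.
apply: (fam_mfun horth okG) => w w' hw hw'; by rewrite hh0 // hh0.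
Qed.

Lemma int_hh : (\int[mu]_w hh w <= (2 * c ^+ 2)%:E)%E.
Proof.
rewrite /hh integral_nneseries //.
rewrite -geo_es; apply: lee_nneseries => [i _ _|k _].
  by apply: integral_ge0 => w _; exact: term_ge0.
rewrite /term ge0_integralZl_EFin //; last first.
- by rewrite exprn_ge0 // exprn_ge0 // ltW.
- exact: (sqn_mfun horth okG).
- by move=> w _; exact: sqn_ge0.
rewrite -sq_intE QE -EFinM lee_fin.
have hq := Qd k.
have e : (2 ^ (k + 1))%:R = 2 * p k :> R by rewrite natrX addn1 exprS.
rewrite e.
have pk := p_gt0 k; have pk1 := p_ge1 k.
apply: le_trans (ler_wpM2l _ hq) _; first by rewrite exprn_ge0 // ltW.
have -> : p k ^+ 2 * (c / p k ^+ 2) ^+ 2 = c ^+ 2 / p k ^+ 2.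
  by field; rewrite gt_eqF.
have -> : 2 * c ^+ 2 / (2 * p k) = c ^+ 2 / p k by field; rewrite gt_eqF.
rewrite ler_pdivrMr ?exprn_gt0 // mulrAC ler_pdivlMr //.
by rewrite ler_wpM2l ?sqr_ge0 // expr2 ler_peMr // ltW.
Qed.

Let hf w := fine (hh w).

Let term_le w k : (hh w < +oo)%E -> p k ^+ 2 * nrm (S (y k.+1 - y k) w) ^+ 2 <= hf w.
Proof.
move=> hw.
have h := term_le_series k (fun i => term_ge0 i w).
have hfin : hh w \is a fin_num by rewrite ge0_fin_numE.
by rewrite /hf -lee_fin fineK // EFinM.
Qed.

Let hf_ge0 w : 0 <= hf w.
Proof. by rewrite /hf fine_ge0. Qed.

Let d_le w (hw : (hh w < +oo)%E) k :
  nrm (G k.+1 w - G k w) <= Num.sqrt (hf w) / 2 ^+ k.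
Proof.
have h := term_le w k hw; rewrite SB in h.
apply: le_sq; first exact: nrm_ge0.
  by rewrite divr_ge0 ?sqrtr_ge0 ?exprn_ge0.
have pk := p_gt0 k.
rewrite expr_div_n (sqr_sqrtr (hf_ge0 w)).
rewrite ler_pdivlMr ?exprn_gt0 // mulrC.
exact: h.
Qed.

Definition Pl w (l : K) := forall k, nrm (G k w - l) <= 2 * Num.sqrt (hf w) / 2 ^+ k.

Let Pl_ex w : (hh w < +oo)%E -> exists l, Pl w l.
Proof. by move=> hw; apply: geo_lim; exact: d_le. Qed.

Definition FF w : K := match pselect (exists l, Pl w l) with
  | left e => proj1_sig (cid e)
  | right _ => 0 end.

Let FF_P w : (hh w < +oo)%E -> Pl w (FF w).
Proof.
move=> hw; rewrite /FF; case: pselect => [e|ne]; first exact: (proj2_sig (cid e)).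
by exfalso; apply: ne; exact: Pl_ex.
Qed.

Let FF_det : det Gs FF.
Proof.
move=> w hw; rewrite /FF; case: pselect => [e|//].
case: (cid e) => l /= hl.
have := hl 0%N; rewrite /hf hh0 // (hw 0%N : G 0%N w = 0) sqrtr0 mulr0 mul0r sub0r nrmN.
move=> hle; apply: nrm_eq0; apply/eqP; rewrite eq_le hle nrm_ge0 //.
Qed.

Let FF_K w : Ksub w (FF w).
Proof.
rewrite /FF; case: pselect => [e|_]; last exact: sub0.
case: (cid e) => l /= hl.
apply: (proj2 (proj2 (hKsub w)) (fun k => G k w)).
  by move=> n; exact: (proj2 (okS (y n))).
move=> eps eps0.
have [M hM] := archi_geo (2 * Num.sqrt (hf w)) eps0.
exists M => n Mn; exact: le_lt_trans (hl n) (hM n Mn).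
Qed.

Let okFF : okf Ksub FF.
Proof.
split => //; apply: (fam_smeas horth okG) => w w' hw hw'.
by rewrite (FF_det w hw) (FF_det w' hw').
Qed.

Let GF_le k w :
  (sqn (fun w => (G k w - FF w)%R) w <= (4 / p k ^+ 2)%:E * hh w)%E.
Proof.
have pk := p_gt0 k.
have [hinf|hfin] := eqVneq (hh w) +oo%E.
  by rewrite hinf gt0_muley ?leey // lte_fin divr_gt0 // exprn_gt0.
have hw : (hh w < +oo)%E by rewrite ltey.
have hfn : hh w \is a fin_num by rewrite ge0_fin_numE.
rewrite -(fineK hfn) -EFinM lee_fin /sqn.
have h := FF_P w hw k.
have h0 := nrm_ge0 (G k w - FF w).
rewrite -/(hf w).
have e : (2 * Num.sqrt (hf w) / 2 ^+ k) ^+ 2 = 4 / p k ^+ 2 * hf w.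
  rewrite expr_div_n exprMn sqr_sqrtr //.
  have -> : (2:R) ^+ 2 = 4 by rewrite expr2; lra.
  by rewrite mulrAC.
rewrite -e.
have h1 : 0 <= 2 * Num.sqrt (hf w) / 2 ^+ k by rewrite divr_ge0 ?mulr_ge0 ?sqrtr_ge0 ?exprn_ge0.
nra.
Qed.

Let GF_int k : (sq_int mu (fun w => (G k w - FF w)%R) <= (4 / p k ^+ 2 * (2 * c ^+ 2))%:E)%E.
Proof.
have pk := p_gt0 k.
have dGF : det Gs (fun w => G k w - FF w).
  by move=> w hw; rewrite (detG k w hw) (FF_det w hw) subr0.
rewrite sq_intE.
apply: le_trans (ge0_le_integral _ _ _ _ _ (fun w _ => GF_le k w)) _ => //.
- by move=> w _; exact: sqn_ge0.
- exact: (sqn_mfun horth okG).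
- exact: measurable_funeM.
rewrite ge0_integralZl_EFin //; last by rewrite divr_ge0 // exprn_ge0 // ltW.
rewrite [X in (_ <= X)%E]EFinM; apply: lee_wpmul2l; last exact: int_hh.
by rewrite lee_fin divr_ge0 // exprn_ge0 // ltW.
Qed.

Let FF_fin : (sq_int mu FF < +oo)%E.
Proof.
have d1 : det Gs (fun w => FF w - G 0%N w).
  by move=> w hw; rewrite (detG 0%N w hw) (FF_det w hw) subr0.
have hh1 : forall w, nrm (FF w) ^+ 2 <= 2 * nrm (FF w - G 0%N w) ^+ 2 + 2 * nrm (G 0%N w) ^+ 2.
  by move=> w; have := nrm_sum2 (FF w - G 0%N w) (G 0%N w); rewrite subrK.
have := sq_int_comb mu horth okG (G := FF) (G1 := fun w => FF w - G 0%N w) (G2 := G 0%N)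
  FF_det d1 (detG 0%N) (a := 2) (b := 2) (ler0n _ 2) (ler0n _ 2) hh1.
have -> : sq_int mu (fun w => FF w - G 0%N w) = sq_int mu (fun w => (G 0%N w - FF w)%R).
  by rewrite !sq_intE; apply: eq_integral => w _; rewrite /sqn nrmB_sym.
move=> hle.
apply: le_lt_trans hle _.
have hb := GF_int 0%N.
rewrite /G QE.
apply: lte_add_pinfty.
  rewrite lte_mul_pinfty // ?lee_fin //.
  exact: le_lt_trans hb (ltry _).
by rewrite -EFinM ltry.
Qed.

Let bnd_cvg : (fun n => (4 / p n ^+ 2 * (2 * c ^+ 2))%:E) @ \oo --> 0%E.
Proof.
apply: cvg_EFin; first exact: nearW.
have -> : (fine \o (fun n => (4 / p n ^+ 2 * (2 * c ^+ 2))%:E)) = geometric (8 * c ^+ 2) 4^-1.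
  apply/funext => n /=; rewrite /p -exprM mulnC exprM.
  have -> : (2:R) ^+ 2 = 4 by rewrite expr2; lra.
  rewrite exprVn; field.
  by rewrite expf_neq0 //; lra.
by apply: cvg_geometric; rewrite ger0_norm ?invr_ge0 // invf_lt1 //; lra.
Qed.

Lemma RF_main : exists ys : X, exists D : R, forall k, N (y k - ys) <= D / 2 ^+ k.
Proof.
have hat : in_hatK mu Ksub FF by split; [exact: (proj1 okFF)|split].
have lim : (fun n => sq_int mu (fun w => L w ((y n).1) + T w ((y n).2) - FF w)) @ \oo --> 0%E.
  apply: (@squeeze_cvge _ _ _ _ (fun=> 0%E) _ (fun n => (4 / p n ^+ 2 * (2 * c ^+ 2))%:E) _ 0%E (cvg_cst _) bnd_cvg).
  apply: nearW => n; rewrite sq_int_ge0 /=.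
  exact: GF_int.
have [f [g hfg]] := (proj2 hdisj) (fun n => (y n).1) (fun n => (y n).2) FF hat lim.
pose ys : X := (f, g).
exists ys, (3 * c) => k.
pose Gs' : nat -> Om -> K := fun n => if n is n'.+1 then S (y n') else S ys.
have okG' n : okf Ksub (Gs' n) by case: n => [|n]; exact: okS.
have dFF : det Gs' FF.
  by move=> w hw; apply: FF_det => n; exact: (hw n.+1).
have hle : (sq_int mu (S (y k - ys)%R) <= sq_int mu (fun w => (G k w - FF w)%R))%E.
  rewrite !sq_intE; apply: ae_ge0_le_integral => //.
  - by move=> w _; exact: sqn_ge0.
  - apply: (sqn_mfun horth okG') => w hw.
    by rewrite SB (hw k.+1 : S (y k) w = 0) (hw 0%N : S ys w = 0) subr0.
  - by move=> w _; exact: sqn_ge0.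
  - apply: (sqn_mfun horth okG') => w hw.
    by rewrite /G (hw k.+1 : S (y k) w = 0) (dFF w hw) subr0.
  - apply: filterS hfg => w hw _.
    by rewrite /sqn SB hw.
have hq : Q (y k - ys) <= 4 / p k ^+ 2 * (2 * c ^+ 2).
  by rewrite -lee_fin -QE; exact: le_trans hle (GF_int k).
have pk := p_gt0 k.
apply: le_sq; first exact: N_ge0.
  by rewrite divr_ge0 ?mulr_ge0 ?exprn_ge0.
rewrite N_sq; apply: le_trans hq _.
rewrite expr_div_n exprMn.
have -> : (3:R) ^+ 2 = 9 by rewrite expr2; lra.
rewrite -/(p k) mulrC mulrA ler_pM2r ?invr_gt0 ?exprn_gt0 //.
have := sqr_ge0 c; lra.
Qed.

End RF.


Definition nX (x : X) := nrm x.1 + nrm x.2.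

Lemma nX_ge0 x : 0 <= nX x.
Proof. by rewrite /nX addr_ge0 ?nrm_ge0. Qed.

Lemma nX1 x : nrm x.1 <= nX x.
Proof. by rewrite /nX lerDl nrm_ge0. Qed.

Lemma nX2 x : nrm x.2 <= nX x.
Proof. by rewrite /nX lerDr nrm_ge0. Qed.

Lemma nX_tri x y : nX (x + y) <= nX x + nX y.
Proof.
rewrite /nX /=; have := nrm_tri x.1 y.1; have := nrm_tri x.2 y.2; lra.
Qed.

Lemma nX_N x : nX (- x) = nX x.
Proof. by rewrite /nX /= !nrmN. Qed.

Lemma nX_scale (r : R) x : nX ((r%:C)%C *: x) = `|r| * nX x.
Proof. by rewrite /nX /= !nrmZ mulrDr. Qed.

Lemma N_opp x : N (- x) = N x.
Proof. by rewrite /N Q_neg. Qed.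

Lemma N0 : N 0 = 0.
Proof. by have := N_scale 0 0; rewrite scaler0 normr0 mul0r. Qed.

Lemma N_eq0 x : N x = 0 -> x = 0.
Proof. by move=> h; apply: Q_inj; rewrite -N_sq h expr0n. Qed.

Fixpoint bseq (stepf : nat -> X -> R -> X * R) (k : nat) : X * R :=
  match k with
  | 0%N => (0, 1)
  | k'.+1 => let yr := bseq stepf k' in let ze := stepf k' yr.1 yr.2 in
             (ze.1, Num.min (yr.2 / 4) (ze.2 / 4))
  end.

Lemma baire : exists (n : nat) (y0 : X) (r0 : R), 0 < r0 /\
  forall z, N (z - y0) < r0 -> forall e, 0 < e ->
  exists x, nX x <= n%:R /\ N (z - x) < e.
Proof.
apply: contrapT => hneg.
have step : forall n y0 r0, 0 < r0 -> exists ze : X * R,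
    N (ze.1 - y0) < r0 /\ 0 < ze.2 /\ forall x, nX x <= n%:R -> ze.2 <= N (ze.1 - x).
  move=> n y0 r0 r0p; apply: contrapT => hno; apply: hneg.
  exists n, y0, r0; split => // z hz e e0.
  apply: contrapT => hx; apply: hno.
  exists (z, e); split => //; split => // x hxn.
  rewrite leNgt; apply/negP => hlt; apply: hx; by exists x.
pose stepf n y0 r0 : X * R := match pselect (0 < r0) with
  | left h => proj1_sig (cid (step n y0 r0 h))
  | right _ => (y0, r0) end.
have stepP : forall n y0 r0, 0 < r0 ->
    N ((stepf n y0 r0).1 - y0) < r0 /\ 0 < (stepf n y0 r0).2 /\
    forall x, nX x <= n%:R -> (stepf n y0 r0).2 <= N ((stepf n y0 r0).1 - x).
  move=> n y0 r0 r0p; rewrite /stepf; case: pselect => [h|//].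
  exact: (proj2_sig (cid (step n y0 r0 h))).
pose yk k := (bseq stepf k).1.
pose rk k := (bseq stepf k).2.
have rpos : forall k, 0 < rk k.
  elim=> [|k IH]; first by rewrite /rk /=; exact: ltr01.
  rewrite /rk /=; have [_ [e0 _]] := stepP k (yk k) (rk k) IH.
  rewrite lt_min; apply/andP; split; apply: divr_gt0 => //; lra.
have hstep : forall k, N (yk k.+1 - yk k) < rk k by move=> k; exact: (stepP k _ _ (rpos k)).1.
have rdec : forall k, rk k.+1 <= rk k / 4 by move=> k; rewrite /rk /= ge_min lexx.
have rek : forall k, rk k.+1 <= (stepf k (yk k) (rk k)).2 / 4.
  by move=> k; rewrite /rk /= ge_min lexx orbT.
have rgeo : forall k, rk k <= 1 / (2 ^+ k) ^+ 2.
  elim=> [|k IH]; first by rewrite /rk /= expr0 expr1n divr1.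
  apply: le_trans (rdec k) _.
  have e : (2:R) ^+ k.+1 = 2 * 2 ^+ k := exprS 2 k.
  have p0 : (2:R) ^+ k != 0 by rewrite expf_neq0.
  have -> : 1 / (2 ^+ k.+1) ^+ 2 = (1 / (2 ^+ k) ^+ 2) / 4 :> R.
    by rewrite e; field; rewrite p0 /=; lra.
  rewrite ler_pM2r // invr_gt0; lra.
have [ys [D hD]] := RF_main yk 1 (fun k => ltW (lt_le_trans (hstep k) (rgeo k))).
have tail : forall k m, N (yk (k + m)%N - yk k) <= 2 * rk k - 2 * rk (k + m)%N.
  move=> k; elim=> [|m IH]; first by rewrite addn0 subrr N0 subrr.
  apply: le_trans (N_triB _ (yk (k + m)%N) _) _.
  rewrite addnS; have h1 := hstep (k + m)%N; have h2 := rdec (k + m)%N.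
  have h3 := rpos (k + m)%N. lra.
have tail2 : forall k, N (ys - yk k) <= 2 * rk k.
  move=> k; apply: le_of_eps => e e0.
  have [M hM] := archi_geo D e0.
  apply: le_trans (N_triB _ (yk (k + maxn M k)%N) _) _.
  rewrite N_sym; have := hD (k + maxn M k)%N.
  have hMk : (M <= k + maxn M k)%N by rewrite (leq_trans (leq_maxl M k)) // leq_addl.
  have h1 := hM _ hMk => h2.
  have := tail k (maxn M k); have := ltW (rpos (k + maxn M k)%N).
  lra.
pose k := (Num.trunc (nX ys)).+1.
have hk : nX ys <= k%:R by apply: ltW; exact: truncnS_gt.
have [_ [ek hek]] := stepP k (yk k) (rk k) (rpos k).
have := hek ys hk.
have := tail2 k.+1; have := rek k.
rewrite N_sym.
rewrite /yk /= -/(yk k) -/(rk k).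
lra.
Qed.


Lemma N_le : exists C, 0 <= C /\ forall x, N x <= C * nX x.
Proof.
have [C [C0 hC]] := Q_le.
exists (Num.sqrt C); split; first exact: sqrtr_ge0.
move=> x; apply: le_sq; rewrite ?N_ge0 ?mulr_ge0 ?sqrtr_ge0 ?nX_ge0 //.
by rewrite N_sq exprMn sqr_sqrtr //; exact: hC.
Qed.

Lemma approx : exists M, 0 <= M /\ forall z, exists x, nX x <= M * N z /\ N (z - x) <= N z / 2.
Proof.
have [n [y0 [r0 [r0p hb]]]] := baire.
exists (4 * n%:R / r0); split; first by rewrite divr_ge0 // ?mulr_ge0 // ltW.
move=> z.
have [Nz0|Nzp] := eqVneq (N z) 0.
  exists 0; rewrite /nX /= nrm0 addr0 Nz0 mulr0 mul0r subr0 Nz0 lexx; split => //.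
have Nzg : 0 < N z by rewrite lt_def Nzp N_ge0.
pose lam := r0 / (2 * N z).
have lam0 : 0 < lam by rewrite divr_gt0 // mulr_gt0.
pose zz := (lam%:C)%C *: z.
have Nzz : N zz = r0 / 2.
  rewrite /zz N_scale ger0_norm ?ltW // /lam; field; by rewrite gt_eqF.
have [x1 [hx1 Nx1]] : exists x, nX x <= n%:R /\ N (y0 + zz - x) < r0 / 8.
  apply: hb; last by rewrite divr_gt0.
  by rewrite addrAC subrr add0r Nzz; lra.
have [x2 [hx2 Nx2]] : exists x, nX x <= n%:R /\ N (y0 - x) < r0 / 8.
  apply: hb; last by rewrite divr_gt0.
  by rewrite subrr N0.
pose xx := x1 - x2.
have hxx : nX xx <= 2 * n%:R.
  apply: le_trans (nX_tri _ _) _; rewrite nX_N; lra.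
have Nxx : N (zz - xx) < r0 / 4.
  have -> : zz - xx = (y0 + zz - x1) - (y0 - x2) by rewrite /xx (zm1 y0).
  apply: le_lt_trans (N_tri _ _) _; rewrite N_opp; lra.
exists ((lam^-1)%:C%C *: xx); split.
  rewrite nX_scale ger0_norm; last by rewrite invr_ge0 ltW.
  rewrite /lam invf_div.
  have -> : 4 * n%:R / r0 * N z = 2 * N z / r0 * (2 * n%:R) by field; rewrite gt_eqF.
  by apply: ler_wpM2l => //; rewrite divr_ge0 ?mulr_ge0 ?N_ge0 // ltW.
have -> : z - (lam^-1)%:C%C *: xx = (lam^-1)%:C%C *: (zz - xx).
  rewrite [RHS]scalerBr /zz scalerA.
  have -> : ((lam^-1)%:C * lam%:C)%C = 1.
    by apply/eqP; rewrite eq_complex /= !mul0r !mulr0 subr0 addr0 (mulVf (lt0r_neq0 lam0)) !eqxx.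
  by rewrite scale1r.
rewrite N_scale ger0_norm; last by rewrite invr_ge0 ltW.
rewrite /lam invf_div.
have -> : N z / 2 = 2 * N z / r0 * (r0 / 4) by field; rewrite gt_eqF.
by apply: ler_wpM2l; [rewrite divr_ge0 ?mulr_ge0 ?N_ge0 // ltW|exact: ltW].
Qed.

Lemma lower : exists M, 0 <= M /\ forall z, nX z <= M * N z.
Proof.
have [M [M0 hM]] := approx.
have [C [C0 hC]] := N_le.
exists (4 * M); split; first lra.
move=> z.
pose px v := proj1_sig (cid (hM v)).
have pxP v : nX (px v) <= M * N v /\ N (v - px v) <= N v / 2 := proj2_sig (cid (hM v)).
pose zs k := iter k (fun v => v - px v) z.
have hzs : forall k, N (zs k) <= N z / 2 ^+ k.
  elim=> [|k IH]; first by rewrite expr0 divr1.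
  rewrite /zs iterS -/(zs k).
  apply: le_trans (proj2 (pxP (zs k))) _.
  have e : N z / 2 ^+ k.+1 = (N z / 2 ^+ k) / 2.
    by rewrite exprS; field; rewrite expf_neq0.
  by rewrite e ler_pM2r ?invr_gt0.
pose ss k := z - zs k.
have hss : forall k, nX (ss k.+1 - ss k) <= M * N z / 2 ^+ k.
  move=> k; rewrite /ss /zs iterS -/(zs k).
  have -> : z - (zs k - px (zs k)) - (z - zs k) = px (zs k) by rewrite zm2.
  apply: le_trans (proj1 (pxP (zs k))) _.
  rewrite -mulrA; apply: ler_wpM2l => //; exact: hzs.
have [l1 hl1] := @geo_lim R H (fun k => (ss k).1) (M * N z)
  (fun k => le_trans (nX1 _) (hss k)).
have [l2 hl2] := @geo_lim R H (fun k => (ss k).2) (M * N z)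
  (fun k => le_trans (nX2 _) (hss k)).
pose s : X := (l1, l2).
have ss0 : ss 0%N = 0 by rewrite /ss /zs /= subrr.
have hs : nX s <= 4 * M * N z.
  have := hl1 0%N; have := hl2 0%N.
  rewrite ss0 /= !sub0r !nrmN expr0 !divr1 /nX /=; lra.
have zs_eq : z = s.
  apply/eqP; rewrite -subr_eq0; apply/eqP; apply: N_eq0.
  apply/eqP; rewrite eq_le N_ge0 andbT.
  apply: le_of_eps => e e0.
  have [K1 hK1] := archi_geo (N z + C * (4 * M * N z)) e0.
  have h1 := hK1 K1 (leqnn K1).
  apply: le_trans (N_triB _ (ss K1) _) _.
  have -> : z - ss K1 = zs K1 by rewrite /ss opprB addrC subrK.
  have h2 := hzs K1.
  have h3 : N (ss K1 - s) <= C * (4 * M * N z / 2 ^+ K1).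
    apply: le_trans (hC _) _; apply: ler_wpM2l => //.
    have := hl1 K1; have := hl2 K1; rewrite /nX /=.
    have -> : 2 * (M * N z) / 2 ^+ K1 = 2 * M * N z / 2 ^+ K1 by rewrite mulrA.
    lra.
  have e3 : (N z + C * (4 * M * N z)) / 2 ^+ K1 = N z / 2 ^+ K1 + C * (4 * M * N z / 2 ^+ K1).
    by rewrite mulrDl [in RHS]mulrA.
  lra.
by rewrite {1}zs_eq.
Qed.

Theorem frame_sum : cont_gframe mu Ksub (fun w f => L w f + T w f).
Proof.
split.
  move=> w; split; last by move=> f; apply: subD.
  split.
    move=> a x y0.
    by rewrite (proj1 (Llin w)) (proj1 (Tlin w)) scalerDr addrACA.
  have [c1 hc1] := proj2 (Llin w); have [c2 hc2] := proj2 (Tlin w).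
  exists (c1 + c2) => x.
  apply: le_trans (nrm_tri _ _) _.
  have := hc1 x; have := hc2 x; lra.
split.
  by move=> f; exact: (proj1 (okS (f, f))).
have [M [M0 hM]] := lower.
have [C [C0 hC]] := Qbound.
pose A := 1 / (M ^+ 2 + 1).
have A0 : 0 < A by rewrite divr_gt0 // ltr_pwDr // sqr_ge0.
exists A, (2 * C + A); split => //; split; first lra.
move=> f; split; last first.
  apply: le_trans (hC (f, f)) _; rewrite lee_fin /=.
  have := sqr_ge0 (nrm f); nra.
have -> : sq_int mu (fun w => L w f + T w f) = sq_int mu (S (f, f)) by [].
rewrite QE lee_fin.
have h := hM (f, f); rewrite /nX /= in h.
have hn := nrm_ge0 f.
have hN := N_ge0 (f, f).
have hq : nrm f ^+ 2 <= M ^+ 2 * Q (f, f).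
  rewrite -N_sq.
  have h' : nrm f <= M * N (f, f) by lra.
  have hMN : 0 <= M * N (f, f) by rewrite mulr_ge0.
  nra.
have hq0 := Q_ge0 (f, f).
rewrite /A mul1r ler_pdivrMl ?ltr_pwDr ?sqr_ge0 //.
nra.
Qed.
End Main.

Theorem corollary2p5 (R : realType) (H K : hilbertType R)
  (d : measure_display) (Om : measurableType d)
  (mu : {measure set Om -> \bar R})
  (Ksub : Om -> set K)
  (hKsub : forall w, closed_subspace (Ksub w))
  (horth : forall w w' : Om, w <> w' -> forall x y : K,
      Ksub w x -> Ksub w' y -> cinner x y = 0)
  (L T : Om -> H -> K)
  (hL : cont_gframe mu Ksub L) (hT : cont_gframe mu Ksub T)
  (hdisj : gframes_disjoint mu Ksub L T) :
  cont_gframe mu Ksub (fun w f => L w f + T w f).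
Proof. by apply: frame_sum. Qed.
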